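(* Let $(x_1,y_1),\dots,(x_n,y_n)\in\mathbb{R}^d\times\mathbb{R}$, $X=(x_1,\dots,x_n)$, $Y=(y_1,\dots,y_n)^T$, $\sigma(z)=\max(z,0)$, and $\lambda>0$. Consider the gradient flow on all weights of $f_t(x)=\sum_{j=1}^mw_j(t)\sigma(x^Tu_j(t))$ for the $\ell_2$-regularized empirical risk $$\frac1{2n}\sum_{i=1}^n(y_i-f_t(x_i))^2+\frac{\lambda}{2m}\sum_{j=1}^m\big[w_j(t)^2+\|u_j(t)\|^2\big],$$ i.e. $\frac{dw_j}{dt}=\frac1n\sum_i(y_i-f_t(x_i))\sigma(x_i^Tu_j)-\frac{\lambda}{m}w_j$, $\frac{du_j}{dt}=\frac1n\sum_i(y_i-f_t(x_i))w_j\mathbb{1}_{x_i^Tu_j\ge0}x_i-\frac{\lambda}{m}u_j$. Assume only that $|w_j(0)^2-\|u_j(0)\|^2|<\infty$ for all $1\le j\le m$. Suppose the dynamics reaches a stationarity, with limiting weights $(w_j(\infty),u_j(\infty))$, signed measure $\widehat\rho^\lambda_\infty=\frac1m\sum_{l=1}^m\mathrm{sgn}(w_l(\infty))\delta_{\sqrt m\,u_l(\infty)}$ and adaptive kernel $\widehat H^\lambda_\infty(x,\tilde x)=\int\sigma(x^T\Theta)\sigma(\tilde x^T\Theta)|\widehat\rho^\lambda_\infty|(d\Theta)$. Then the network function at stationarity satisfies, for every $x$, $$\widehat f^{\mathrm{nn},\lambda}_\infty(x)=\widehat H^\lambda_\infty(x,X)\Big[\tfrac nm\lambda\, I_n+\widehat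 H^\lambda_\infty(X,X)\Big]^{-1}Y,$$ where $\widehat H^\lambda_\infty(x,X)\in\mathbb{R}^{1\times n}$ and $\widehat H^\lambda_\infty(X,X)\in\mathbb{R}^{n\times n}$ are the kernel evaluations.
   Context: For a signed measure $\rho=\rho_+-\rho_-$, $|\rho|=\rho_++\rho_-$, so $|\widehat\rho^\lambda_\infty|=\frac1m\sum_l\delta_{\sqrt m u_l(\infty)}$. ''Stationarity'' means the $t\to\infty$ limit of the gradient flow, at which the gradient-flow vector field vanishes. *)

(* Defs.v *)
From HB Require Import structures.
From mathcomp Require Import all_boot all_order all_algebra.
From mathcomp Require Import all_classical all_reals all_analysis.
Set Implicit Arguments. Unset Strict Implicit. Unset Printing Implicit Defensive.
Import Order.TTheory GRing.Theory Num.Theory.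
Import numFieldNormedType.Exports.
Local Open Scope ring_scope.

Section Defs.
Variable R : realType.

Definition relu (z : R) : R := Num.max z 0.

Definition dotp (d : nat) (a b : 'I_d -> R) : R := \sum_(k < d) a k * b k.

Definition sqnorm (d : nat) (a : 'I_d -> R) : R := dotp a a.

Definition netf (d m : nat) (w : 'I_m -> R) (u : 'I_m -> 'I_d -> R)
  (x : 'I_d -> R) : R := \sum_(j < m) w j * relu (dotp x (u j)).

Definition resid (d n m : nat) (X : 'I_n -> 'I_d -> R) (Y : 'I_n -> R)
  (w : 'I_m -> R) (u : 'I_m -> 'I_d -> R) (i : 'I_n) : R :=
  Y i - netf w u (X i).

Definition ind_ge0 (z : R) : R := if 0 <= z then 1 else 0.

Definition vf_w (d n m : nat) (X : 'I_n -> 'I_d -> R) (Y : 'I_n -> R) (lam : R)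
  (w : 'I_m -> R) (u : 'I_m -> 'I_d -> R) (j : 'I_m) : R :=
  n%:R^-1 * (\sum_(i < n) resid X Y w u i * relu (dotp (X i) (u j)))
  - lam / m%:R * w j.

Definition vf_u (d n m : nat) (X : 'I_n -> 'I_d -> R) (Y : 'I_n -> R) (lam : R)
  (w : 'I_m -> R) (u : 'I_m -> 'I_d -> R) (j : 'I_m) (k : 'I_d) : R :=
  n%:R^-1 * (\sum_(i < n) resid X Y w u i * w j * ind_ge0 (dotp (X i) (u j)) * X i k)
  - lam / m%:R * u j k.

(* Integral of a function g against the total-variation measure
   |rho| = 1/m sum_l delta_{sqrt m u_l} (a finite sum of Dirac masses). *)
Definition int_absrho (d m : nat) (u : 'I_m -> 'I_d -> R) (g : ('I_d -> R) -> R) : R :=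
  m%:R^-1 * \sum_(l < m) g (fun k => Num.sqrt m%:R * u l k).

Definition Hker (d m : nat) (u : 'I_m -> 'I_d -> R) (x xt : 'I_d -> R) : R :=
  int_absrho u (fun th => relu (dotp x th) * relu (dotp xt th)).

Definition HxX (d n m : nat) (u : 'I_m -> 'I_d -> R) (X : 'I_n -> 'I_d -> R)
  (x : 'I_d -> R) : 'rV[R]_n := \row_(i < n) Hker u x (X i).
Definition HXX (d n m : nat) (u : 'I_m -> 'I_d -> R) (X : 'I_n -> 'I_d -> R)
  : 'M[R]_n := \matrix_(i < n, i' < n) Hker u (X i) (X i').

End Defs.

(* Main.v *)
Require Import Defs.
From HB Require Import structures.
From mathcomp Require Import all_boot all_order all_algebra.
From mathcomp Require Import all_classical all_reals all_analysis.
From mathcomp Require Import ring lra.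
Import Order.TTheory GRing.Theory Num.Theory.
Import numFieldNormedType.Exports.
Local Open Scope classical_set_scope.
Local Open Scope ring_scope.

Lemma relu_scale (R : realType) (a z : R) : 0 <= a -> relu (a * z) = a * relu z.
Proof. by move=> ha; rewrite /relu maxr_pMr // mulr0. Qed.

Lemma dotp_scale (R : realType) d (a : R) (x u : 'I_d -> R) :
  dotp x (fun k => a * u k) = a * dotp x u.
Proof. by rewrite /dotp mulr_sumr; apply: eq_bigr => k _; rewrite mulrCA. Qed.

Lemma Hker_sum (R : realType) d m (u : 'I_m -> 'I_d -> R) x y : (0 < m)%N ->
  Hker u x y = \sum_(l < m) relu (dotp x (u l)) * relu (dotp y (u l)).
Proof.
move=> hm; rewrite /Hker /int_absrho mulr_sumr; apply: eq_bigr => l _.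
have hs0 : 0 <= Num.sqrt (m%:R : R) by apply: sqrtr_ge0.
rewrite !dotp_scale !relu_scale //.
have hs : Num.sqrt (m%:R : R) * Num.sqrt m%:R = m%:R by rewrite -expr2 sqr_sqrtr ?ler0n.
by rewrite mulrACA hs mulKf // pnatr_eq0 -lt0n.
Qed.

Lemma sqform (R : realType) p (z : 'rV[R]_p) :
  (z *m z^T) 0 0 = \sum_(j < p) z 0 j ^+ 2.
Proof. by rewrite mxE; apply: eq_bigr => j _; rewrite mxE expr2. Qed.

Lemma sqform_ge0 (R : realType) p (z : 'rV[R]_p) : 0 <= (z *m z^T) 0 0.
Proof. by rewrite sqform; apply: sumr_ge0 => j _; apply: sqr_ge0. Qed.

Lemma sqform_eq0 (R : realType) p (z : 'rV[R]_p) : (z *m z^T) 0 0 = 0 -> z = 0.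
Proof.
rewrite sqform => /eqP; rewrite psumr_eq0; last by move=> j _; apply: sqr_ge0.
move=> /allP h; apply/rowP => j; rewrite mxE.
by apply/eqP; rewrite -sqrf_eq0; apply: (h j); rewrite mem_index_enum.
Qed.

Lemma unit_gram (R : realType) n m (S : 'M[R]_(n, m)) (k : R) : 0 < k ->
  (k%:M + S *m S^T) \in unitmx.
Proof.
move=> hk; set A := _ + _.
rewrite -row_free_unit -kermx_eq0; apply/eqP/row_matrixP => i; rewrite row0.
set v := row i (kermx A).
have hv : v *m A = 0 by rewrite -row_mul mulmx_ker row0.
have he : v *m A *m v^T = k *: (v *m v^T) + (v *m S) *m (v *m S)^T.
  by rewrite /A mulmxDr mul_mx_scalar mulmxDl -scalemxAl trmx_mul !mulmxA.
have : (v *m A *m v^T) 0 0 = 0 by rewrite hv mul0mx mxE.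
have h1 : 0 <= k * (v *m v^T) 0 0 by apply: mulr_ge0; [exact: ltW | exact: sqform_ge0].
rewrite he mxE [X in X + _ = _]mxE => /eqP; rewrite paddr_eq0 //; last exact: sqform_ge0.
case/andP; rewrite mulf_eq0 gt_eqF //= => /eqP h _.
exact: sqform_eq0.
Qed.

Lemma key_alg (R : realType) n m (S : 'M[R]_(n, m)) (tv : 'rV[R]_m) (W : 'cV[R]_m)
  (Yc : 'cV[R]_n) (k : R) : 0 < k -> S^T *m (Yc - S *m W) = k *: W ->
  tv *m S^T *m invmx (k%:M + S *m S^T) *m Yc = tv *m W.
Proof.
move=> kpos KW.
have hA : (k%:M + S *m S^T) \in unitmx by exact: unit_gram.
have hArv : (k%:M + S *m S^T) *m (Yc - S *m W) = k *: Yc.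
  rewrite mulmxDl mul_scalar_mx -mulmxA KW -scalemxAr -scalerDr.
  by rewrite subrK.
have hinv : invmx (k%:M + S *m S^T) *m Yc = k^-1 *: (Yc - S *m W).
  have : invmx (k%:M + S *m S^T) *m (k *: Yc) = Yc - S *m W
    by rewrite -hArv mulmxA mulVmx // mul1mx.
  rewrite -scalemxAr => <-.
  by rewrite scalerA mulVf ?gt_eqF // scale1r.
rewrite -!mulmxA hinv.
by rewrite -!scalemxAr KW -!scalemxAr scalerA mulVf ?gt_eqF // scale1r.
Qed.

Theorem proposition1 (R : realType) (d n m : nat)
  (X : 'I_n -> 'I_d -> R) (Y : 'I_n -> R) (lam : R) (hlam : 0 < lam)
  (w : 'I_m -> R -> R) (u : 'I_m -> 'I_d -> R -> R)
  (winf : 'I_m -> R) (uinf : 'I_m -> 'I_d -> R)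
  (* gradient flow for t > 0 *)
  (hflow_w : forall (t : R) (j : 'I_m), 0 < t ->
     is_derive t 1 (w j) (vf_w X Y lam (fun j' => w j' t) (fun j' k => u j' k t) j))
  (hflow_u : forall (t : R) (j : 'I_m) (k : 'I_d), 0 < t ->
     is_derive t 1 (u j k) (vf_u X Y lam (fun j' => w j' t) (fun j' k' => u j' k' t) j k))
  (* initial condition: |w_j(0)^2 - ||u_j(0)||^2| < oo (automatic for real weights) *)
  (hinit : forall j : 'I_m, ((`| w j 0 ^+ 2 - sqnorm (fun k => u j k 0) |)%:E < +oo)%E)
  (* the limiting weights *)
  (hlim_w : forall j : 'I_m, w j t @[t --> +oo] --> winf j)
  (hlim_u : forall (j : 'I_m) (k : 'I_d), u j k t @[t --> +oo] --> uinf j k)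
  (* stationarity: the gradient-flow vector field vanishes at the limit *)
  (hstat_w : forall j : 'I_m, vf_w X Y lam winf uinf j = 0)
  (hstat_u : forall (j : 'I_m) (k : 'I_d), vf_u X Y lam winf uinf j k = 0) :
  forall x : 'I_d -> R,
    netf winf uinf x =
    (HxX uinf X x *m invmx ((n%:R / m%:R * lam)%:M + HXX uinf X)
       *m \col_(i < n) Y i) 0 0.
Proof.
move=> x.
case: (posnP m) => [m0 | mpos].
  subst m; rewrite /netf big_ord0.
  have -> : HxX uinf X x = 0 by apply/rowP => i; rewrite !mxE /Hker /int_absrho invr0 mul0r.
  by rewrite !mul0mx mxE.
have hm0 : (m%:R : R) != 0 by rewrite pnatr_eq0 -lt0n.
case: (posnP n) => [n0 | npos].
  subst n; rewrite /netf [RHS]mxE big_ord0 big1 // => j _.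
  have := hstat_w j; rewrite /vf_w big_ord0 mulr0 sub0r => /eqP; rewrite oppr_eq0.
  rewrite mulf_eq0 mulf_eq0 invr_eq0 (negbTE hm0) gt_eqF //= => /eqP ->.
  by rewrite mul0r.
have hn0 : (n%:R : R) != 0 by rewrite pnatr_eq0 -lt0n.
set S : 'M[R]_(n, m) := \matrix_(i, l) relu (dotp (X i) (uinf l)).
set tv : 'rV[R]_m := \row_l relu (dotp x (uinf l)).
set W : 'cV[R]_m := \col_j winf j.
set Yc : 'cV[R]_n := \col_i Y i.
set rv : 'cV[R]_n := Yc - S *m W.
set k : R := n%:R / m%:R * lam.
have kpos : 0 < k by rewrite /k mulr_gt0 // divr_gt0 // ltr0n.
have hH : HXX uinf X = S *m S^T.
  apply/matrixP => i i'; rewrite !mxE Hker_sum //; apply: eq_bigr => l _.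
  by rewrite !mxE.
have hh : HxX uinf X x = tv *m S^T.
  apply/rowP => i; rewrite !mxE Hker_sum //; apply: eq_bigr => l _.
  by rewrite !mxE.
have hnet : netf winf uinf x = (tv *m W) 0 0.
  by rewrite /netf mxE; apply: eq_bigr => j _; rewrite !mxE mulrC.
have hres : forall i, resid X Y winf uinf i = rv i 0.
  move=> i; rewrite /resid /netf !mxE; congr (_ - _).
  by apply: eq_bigr => j _; rewrite !mxE mulrC.
have KW : S^T *m rv = k *: W.
  apply/colP => j; rewrite !mxE.
  have := hstat_w j; rewrite /vf_w => /eqP; rewrite subr_eq0 => /eqP /(congr1 (fun z => n%:R * z)).
  rewrite mulVKf // => heq.
  transitivity (\sum_(i < n) resid X Y winf uinf i * relu (dotp (X i) (uinf j))).
    by apply: eq_bigr => i _; rewrite hres !mxE mulrC.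
  by rewrite heq /k; field.
rewrite hnet hh hH.
by rewrite (@key_alg R n m S tv W Yc k kpos KW).
Qed.
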